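(* Let $G_0^*$ be a $(k,r)$-regular hypergraph on $n$ vertices, and list the eigenvalues of $A(G_0^* )$ with multiplicity as $\lambda_1=r(k-1),\lambda_2,\dots,\lambda_n$. Let $b=\binom{n-1}{k-2}$, $N_j=n(n+1)^{j-1}$, and define matrices recursively by $\mathcal{A}^{(1)}=A(G_0^* )$ and, for $m\ge 2$, $$\mathcal{A}^{(m)}=\begin{bmatrix}\mathcal{A}^{(m-1)} & b\,(J_{1,n}\otimes I_{N_{m-1}})\\ b\,(J_{n,1}\otimes I_{N_{m-1}}) & A(G_0^* )\otimes I_{N_{m-1}}\end{bmatrix}$$ (an $N_m\times N_m$ matrix; it is the corona matrix of the hypergraph represented by $\mathcal{A}^{(m-1)}$ with $G_0^*$). Define $\phi_\pm(x)=\frac{x+r(k-1)\pm\sqrt{(x-r(k-1))^2+4nb^2}}{2}$, and for real $x$ define multisets $\Phi^0(x)=\{x\}$ and $\Phi^j(x)=\biguplus_{y\in\Phi^{j-1}(x)}\{\phi_+(y),\phi_-(y)\}$ for $j\ge1$ (so $\Phi^j(x)$ has $2^j$ elements counted with multiplicity). Then for every $m\ge1$ the spectrum of $\mathcal{A}^{(m)}$, as a multiset, is $$\biguplus_{i=1}^n\Phi^{m-1}(\lambda_i)\ \uplus\ \biguplus_{j=0}^{m-2}\ \biguplus_{i=2}^n\ \big(\Phi^j(\lambda_i)\text{ taken } n(n+1)^{m-j-2}\text{ times}\big).$$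
   Context: All hypergraphs are finite and simple: a hypergraph $G^*=(V,E)$ consists of a finite vertex set $V$ and a set $E$ of subsets of $V$ (hyperedges), each of size at least $2$. It is $k$-uniform if every hyperedge has exactly $k$ elements, and $(k,r)$-regular if it is $k$-uniform and every vertex lies in exactly $r$ hyperedges. For a hypergraph with vertices $v_1,\dots,v_n$, the adjacency matrix $A(G^* )$ is the $n\times n$ matrix whose $(i,j)$ entry, for $i\ne j$, is the number of hyperedges containing both $v_i$ and $v_j$, and whose diagonal entries are $0$. $J_{a,b}$ is the all-ones $a\times b$ matrix, $I_N$ the identity, $\otimes$ the Kronecker product, $\uplus$ multiset union. Binomial coefficients $\binom{x}{y}$ with integers $x\ge 0$ and $y$ are $0$ when $y<0$ or $y>x$. *)

(* Defs.v *)
From HB Require Import structures.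
From mathcomp Require Import all_boot all_order all_algebra.
Set Implicit Arguments. Unset Strict Implicit. Unset Printing Implicit Defensive.
Import Order.TTheory GRing.Theory Num.Theory.
Local Open Scope ring_scope.

Lemma kron_div_lt (a c i : nat) : (i < a * c)%N -> (i %/ c < a)%N.
Proof. by case: c => [|c]; rewrite ?muln0 // => h; rewrite ltn_divLR. Qed.

Lemma kron_mod_lt (a c i : nat) : (i < a * c)%N -> (i %% c < c)%N.
Proof. by case: c => [|c]; rewrite ?muln0 // => _; rewrite ltn_pmod. Qed.

(* (A \otimes B)[i*c + i', j*d + j'] = A[i,j] * B[i',j'] *)
Definition kron (R : pzRingType) (a b c d : nat)
    (A : 'M[R]_(a, b)) (B : 'M[R]_(c, d)) : 'M[R]_(a * c, b * d) :=
  \matrix_(i < a * c, j < b * d)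
    (A (Ordinal (kron_div_lt (ltn_ord i))) (Ordinal (kron_div_lt (ltn_ord j)))
     * B (Ordinal (kron_mod_lt (ltn_ord i))) (Ordinal (kron_mod_lt (ltn_ord j)))).

Definition is_hypergraph (n : nat) (E : {set {set 'I_n}}) : Prop :=
  forall e, e \in E -> (2 <= #|e|)%N.

Definition kr_regular (n : nat) (E : {set {set 'I_n}}) (k r : nat) : Prop :=
  (forall e, e \in E -> #|e| = k) /\
  (forall v : 'I_n, #|[set e in E | v \in e]| = r).

Definition hadj (R : pzRingType) (n : nat) (E : {set {set 'I_n}}) : 'M[R]_n :=
  \matrix_(i, j) (if i == j then 0
                  else (#|[set e in E | (i \in e) && (j \in e)]|)%:R).

(* b = binom(n-1, k-2), which is 0 when k - 2 < 0 *)
Definition bcoef (n k : nat) : nat := if (2 <= k)%N then 'C(n.-1, k - 2) else 0%N.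

(* size N_{m+1} = n (n+1)^m  (0-based index m: corona_mx m = \mathcal A^{(m+1)}) *)
Definition Nsz (n m : nat) : nat := (n * (n + 1) ^ m)%N.

Lemma NszS (n m : nat) : Nsz n m.+1 = (Nsz n m + n * Nsz n m)%N.
Proof. by rewrite /Nsz expnS mulnA [(n * (n + 1))%N]mulnC -mulnA mulnDl mul1n addnC. Qed.

Fixpoint corona_mx (R : pzRingType) (n : nat) (A0 : 'M[R]_n) (b : R) (m : nat)
  : 'M[R]_(Nsz n m) :=
  match m return 'M[R]_(Nsz n m) with
  | 0 => castmx (esym (muln1 n), esym (muln1 n)) A0
  | m'.+1 =>
      castmx (esym (NszS n m'), esym (NszS n m'))
        (block_mx (corona_mx A0 b m')
           (b *: castmx (mul1n _, erefl)
                    (kron (const_mx 1 : 'M[R]_(1, n)) (1%:M : 'M[R]_(Nsz n m'))))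
           (b *: castmx (erefl, mul1n _)
                    (kron (const_mx 1 : 'M[R]_(n, 1)) (1%:M : 'M[R]_(Nsz n m'))))
           (kron A0 (1%:M : 'M[R]_(Nsz n m'))))
  end.

Definition phi (R : rcfType) (c D : R) (plus : bool) (x : R) : R :=
  (x + c + (if plus then 1 else -1) * Num.sqrt ((x - c) ^+ 2 + D)) / 2.

Fixpoint Phi (R : rcfType) (c D : R) (j : nat) (x : R) : seq R :=
  match j with
  | 0 => [:: x]
  | j'.+1 => flatten [seq [:: phi c D true y; phi c D false y] | y <- Phi c D j' x]
  end.

(* the claimed spectrum of \mathcal A^{(m)} (1-based m), lam = [l_1; ...; l_n] *)
Definition corona_spec (R : rcfType) (n : nat) (c D : R) (lam : seq R) (m : nat)
  : seq R :=
  flatten [seq Phi c D m.-1 l | l <- lam] ++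
  flatten [seq flatten (nseq (n * (n + 1) ^ (m - j - 2))
                           (flatten [seq Phi c D j l | l <- behead lam]))
          | j <- iota 0 m.-1].

(* Main.v *)
Require Import Defs.
From HB Require Import structures.
From mathcomp Require Import all_boot all_order all_algebra all_fingroup.
From mathcomp Require Import ring lra.
Set Implicit Arguments. Unset Strict Implicit. Unset Printing Implicit Defensive.
Import Order.TTheory GRing.Theory Num.Theory.
Local Open Scope ring_scope.

Definition kdiv (a c : nat) (i : 'I_(a * c)) : 'I_a := Ordinal (kron_div_lt (ltn_ord i)).
Definition kmod (a c : nat) (i : 'I_(a * c)) : 'I_c := Ordinal (kron_mod_lt (ltn_ord i)).

Lemma kronE (R : pzRingType) (a b c d : nat) (A : 'M[R]_(a, b)) (B : 'M[R]_(c, d)) i j :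
  kron A B i j = A (kdiv i) (kdiv j) * B (kmod i) (kmod j).
Proof. by rewrite mxE. Qed.

Lemma kidx_lt (a c : nat) (i : 'I_a) (j : 'I_c) : (i * c + j < a * c)%N.
Proof.
have := ltn_ord i; have := ltn_ord j => hj hi.
apply: (@leq_trans (i * c + c)); first by rewrite ltn_add2l.
by rewrite -mulSnr leq_mul2r hi orbT.
Qed.

Definition kidx (a c : nat) (i : 'I_a) (j : 'I_c) : 'I_(a * c) := Ordinal (kidx_lt i j).

Lemma kdiv_kidx a c (i : 'I_a) (j : 'I_c) : kdiv (kidx i j) = i.
Proof.
apply: val_inj => /=. have hc : (0 < c)%N by case: j => j /=; case: c => //.
by rewrite divnMDl // divn_small ?addn0.
Qed.

Lemma kmod_kidx a c (i : 'I_a) (j : 'I_c) : kmod (kidx i j) = j.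
Proof. by apply: val_inj => /=; rewrite modnMDl modn_small. Qed.

Lemma kidxK a c (p : 'I_(a * c)) : kidx (kdiv p) (kmod p) = p.
Proof. by apply: val_inj => /=; rewrite -divn_eq. Qed.

Lemma kidx_inj a c (i i' : 'I_a) (j j' : 'I_c) :
  (kidx i j == kidx i' j') = (i == i') && (j == j').
Proof.
apply/eqP/andP => [h | [/eqP -> /eqP ->] //].
split; apply/eqP.
  by rewrite -(kdiv_kidx i j) h kdiv_kidx.
by rewrite -(kmod_kidx i j) h kmod_kidx.
Qed.

Lemma sum_kron (R : nmodType) a c (F : 'I_(a * c) -> R) :
  \sum_(p < a * c) F p = \sum_(i < a) \sum_(j < c) F (kidx i j).
Proof.
rewrite pair_big /=.
rewrite (reindex (fun q : 'I_a * 'I_c => kidx q.1 q.2)) //=.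
apply: onW_bij; exists (fun p => (kdiv p, kmod p)).
  by case=> i j /=; rewrite kdiv_kidx kmod_kidx.
by move=> p /=; rewrite kidxK.
Qed.

Lemma det_castmx (R : comPzRingType) a b (e : a = b) (A : 'M[R]_a) :
  \det (castmx (e, e) A) = \det A.
Proof. by case: b / e; rewrite castmx_id. Qed.

Lemma det_conj_inj (R : comPzRingType) m (A : 'M[R]_m) (f : 'I_m -> 'I_m) :
  injective f -> \det (\matrix_(i, j) A (f i) (f j)) = \det A.
Proof.
move=> hf; pose s := perm hf.
have -> : \matrix_(i, j) A (f i) (f j) = row_perm s (col_perm s A).
  by apply/matrixP => i j; rewrite !mxE !permE.
rewrite row_permE col_permE !det_mulmx !det_perm odd_permV.
by rewrite mulrCA -expr2 sqrr_sign mulr1.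
Qed.

Lemma divDn n x : (0 < n)%N -> ((n + x) %/ n = (x %/ n).+1)%N.
Proof. by move=> hn; rewrite -{1}(mul1n n) divnMDl. Qed.
Lemma modDn n x : ((n + x) %% n = x %% n)%N.
Proof. by rewrite -{1}(mul1n n) modnMDl. Qed.

Lemma kron1_block (R : comPzRingType) n N (B : 'M[R]_n) :
  kron (1%:M : 'M[R]_N.+1) B = block_mx B 0 0 (kron (1%:M : 'M[R]_N) B) :> 'M_(n + N * n).
Proof.
  apply/matrixP => i j.
  case: (splitP i) => i' Hi.
    have {Hi} -> : i = lshift _ i' by apply: val_inj.
  all: try (have {Hi} -> : i = rshift n i' by apply: val_inj).
  all: case: (splitP j) => j' Hj.
  all: try (have {Hj} -> : j = lshift _ j' by apply: val_inj).
  all: try (have {Hj} -> : j = rshift n j' by apply: val_inj).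
  all: rewrite ?block_mxEul ?block_mxEur ?block_mxEdl ?block_mxEdr !mxE.
  - have hn : (0 < n)%N by apply: leq_ltn_trans (ltn_ord i').
    rewrite -!val_eqE /= !divn_small // eqxx mul1r.
    by congr (B _ _); apply: val_inj; rewrite /= modn_small.
  - have hn : (0 < n)%N by apply: leq_ltn_trans (ltn_ord i').
    by rewrite -!val_eqE /= divn_small // divDn // mul0r.
  - have hn : (0 < n)%N by apply: leq_ltn_trans (ltn_ord j').
    by rewrite -!val_eqE /= (divn_small (ltn_ord j')) divDn // mul0r.
  - have : (0 < N * n)%N by apply: leq_ltn_trans (ltn_ord i').
    rewrite muln_gt0 => /andP[_ hn].
    rewrite -!val_eqE /= !divDn // eqSS.
    by congr (_ * B _ _); apply: val_inj; rewrite /= modDn.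
Qed.

Lemma det_kron1 (R : comPzRingType) n N (B : 'M[R]_n) :
  \det (kron (1%:M : 'M[R]_N) B) = \det B ^+ N.
Proof.
elim: N => [|N IH]; first by rewrite expr0; exact: det_mx00.
by rewrite kron1_block det_ublock IH exprS.
Qed.

Lemma det_kron1r (R : comPzRingType) n N (B : 'M[R]_n) :
  \det (kron B (1%:M : 'M[R]_N)) = \det B ^+ N.
Proof.
pose e := mulnC n N.
pose g (q : 'I_(N * n)) : 'I_(N * n) := cast_ord e (kidx (kmod q) (kdiv q)).
have ginj : injective g.
  move=> p q /(congr1 (cast_ord (esym e))); rewrite !cast_ordK => /eqP.
  rewrite kidx_inj => /andP[/eqP h1 /eqP h2].
  by rewrite -(kidxK p) -(kidxK q) h1 h2.
rewrite -(det_castmx e) -(det_conj_inj _ ginj) -(det_kron1 N B).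
congr (\det _); apply/matrixP => p q.
rewrite !mxE castmxE /= !cast_ordK !kronE !kdiv_kidx !kmod_kidx mulrC.
by rewrite !mxE.
Qed.

Lemma horner_charpoly (R : comNzRingType) m (A : 'M[R]_m) x :
  (char_poly A).[x] = \det (x%:M - A).
Proof.
rewrite /char_poly -[_.[x]]/(horner_eval x _) -det_map_mx.
congr (\det _); apply/matrixP => i j; rewrite !mxE.
by rewrite /= horner_evalE !hornerE hornerMn hornerX.
Qed.

Definition Ublk (R : pzRingType) n N : 'M[R]_(N, n * N) :=
  castmx (mul1n _, erefl) (kron (const_mx 1 : 'M[R]_(1, n)) (1%:M : 'M[R]_N)).
Definition Vblk (R : pzRingType) n N : 'M[R]_(n * N, N) :=
  castmx (erefl, mul1n _) (kron (const_mx 1 : 'M[R]_(n, 1)) (1%:M : 'M[R]_N)).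

Lemma kmod_cast1 N (p : 'I_N) : kmod (cast_ord (esym (mul1n N)) p) = p.
Proof. by apply: val_inj => /=; rewrite modn_small. Qed.

Lemma UblkE (R : pzRingType) n N p (j : 'I_n) (j' : 'I_N) :
  Ublk R n N p (kidx j j') = (p == j')%:R.
Proof.
rewrite /Ublk castmxE /= cast_ord_id kronE kmod_cast1 kmod_kidx !mxE mul1r.
by [].
Qed.

Lemma VblkE (R : pzRingType) n N q (j : 'I_n) (j' : 'I_N) :
  Vblk R n N (kidx j j') q = (j' == q)%:R.
Proof.
by rewrite /Vblk castmxE /= cast_ord_id kronE kmod_cast1 kmod_kidx !mxE mul1r.
Qed.

Lemma sum_delta (R : pzSemiRingType) N (p : 'I_N) (F : 'I_N -> R) :
  \sum_(j < N) (p == j)%:R * F j = F p.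
Proof.
rewrite (bigD1 p) //= eqxx mul1r big1 ?addr0 // => j hj.
by rewrite eq_sym (negbTE hj) mul0r.
Qed.

Lemma UV (R : comPzRingType) n N : Ublk R n N *m Vblk R n N = (n%:R)%:M.
Proof.
apply/matrixP => p q; rewrite !mxE sum_kron.
under eq_bigr do under eq_bigr do rewrite UblkE VblkE.
under eq_bigr do rewrite sum_delta.
by rewrite sumr_const card_ord; case: (p == q) => //=; rewrite mul0rn.
Qed.

Lemma KV (R : comPzRingType) n N (A0 : 'M[R]_n) c :
  (forall i, \sum_j A0 i j = c) ->
  kron A0 (1%:M : 'M[R]_N) *m Vblk R n N = c *: Vblk R n N.
Proof.
move=> hA; apply/matrixP => p q; rewrite -(kidxK p) !mxE sum_kron VblkE.
under eq_bigr do under eq_bigr do rewrite kronE VblkE !kdiv_kidx !kmod_kidx mxE -mulrA.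
under eq_bigr do rewrite -big_distrr /= sum_delta.
by rewrite -big_distrl /= hA.
Qed.

Lemma xK (R : comPzRingType) n N (A0 : 'M[R]_n) x :
  x%:M - kron A0 (1%:M : 'M[R]_N) = kron (x%:M - A0) (1%:M : 'M[R]_N).
Proof.
apply/matrixP => p q; rewrite -(kidxK p) -(kidxK q).
rewrite !kronE !kdiv_kidx !kmod_kidx [LHS]mxE [X in _ + X = _]mxE [X in X - _]mxE kronE !kdiv_kidx !kmod_kidx kidx_inj !mxE.
by case: (kdiv p == kdiv q); case: (kmod p == kmod q); rewrite ?mulr1 ?mulr0 ?subr0 ?mul0rn ?mulr1n ?sub0r.
Qed.

Lemma poly_eq_ev (R : numFieldType) (p q : {poly R}) (c : R) :
  (forall x, x != c -> p.[x] = q.[x]) -> p = q.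
Proof.
move=> h; apply/eqP; rewrite -subr_eq0.
have hX : 'X - c%:P != 0 by rewrite polyXsubC_eq0.
suff /eqP : (p - q) * ('X - c%:P) = 0 by rewrite mulf_eq0 (negbTE hX) orbF.
apply/eqP; set r := _ * _.
apply/negPn/negP => hr.
suff : (size [seq (i%:R : R) | i <- iota 0 (size r)] < size r)%N by rewrite size_map size_iota ltnn.
apply: max_poly_roots hr _ _.
  apply/allP => x _; rewrite /root /r hornerM hornerXsubC hornerD hornerN.
  by have [->|/h ->] := eqVneq x c; rewrite ?subrr ?mulr0 ?mul0r ?eqxx.
rewrite map_inj_uniq ?iota_uniq // => i j /eqP; rewrite eqr_nat => /eqP.
done.
Qed.

Lemma phi_prod (R : rcfType) (c D mu x : R) : 0 <= D ->
  (x - phi c D true mu) * (x - phi c D false mu) = (x - c) * (x - mu) - D / 4.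
Proof.
move=> hD; rewrite /phi mul1r mulN1r.
have hS := sqr_sqrtr (addr_ge0 (sqr_ge0 (mu - c)) hD).
move: (Num.sqrt _) hS => S hS.
have -> : D = S ^+ 2 - (mu - c) ^+ 2 by rewrite hS; ring.
by field.
Qed.

Definition cblock (R : pzRingType) n N (P : 'M[R]_N) (A0 : 'M[R]_n) (b : R)
  : 'M[R]_(N + n * N) :=
  block_mx P (b *: Ublk R n N) (b *: Vblk R n N) (kron A0 (1%:M : 'M[R]_N)).

Lemma step_eval (R : fieldType) n N (P : 'M[R]_N) (A0 : 'M[R]_n) (b c x : R) :
  (forall i, \sum_j A0 i j = c) ->
  \det (x%:M - cblock P A0 b) * (x - c) ^+ N =
  \det ((x - c) *: (x%:M - P) - (b * b * n%:R)%:M) * \det (x%:M - A0) ^+ N.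
Proof.
move=> hA.
have E : (x%:M - cblock P A0 b) *m block_mx ((x - c)%:M) 0 (b *: Vblk R n N) 1%:M
   = block_mx ((x - c) *: (x%:M - P) - (b * b * n%:R)%:M) (- (b *: Ublk R n N)) 0
              (x%:M - kron A0 (1%:M : 'M[R]_N)).
  rewrite /cblock (scalar_mx_block N (n * N) x) opp_block_mx add_block_mx !sub0r mulmx_block.
  congr block_mx.
  - by rewrite mul_mx_scalar mulNmx -scalemxAl -scalemxAr UV scalerA scale_scalar_mx.
  - by rewrite mulmx0 add0r mulmx1.
  - rewrite mul_mx_scalar mulmxBl mul_scalar_mx -scalemxAr (KV _ hA).
    by apply/matrixP => i j; rewrite !mxE; ring.
  - by rewrite mulmx0 add0r mulmx1.
have := congr1 determinant E.
rewrite det_mulmx det_lblock det_ublock det_scalar det1 mulr1 => ->.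
by rewrite xK det_kron1r.
Qed.

Lemma step_char (R : rcfType) n N (P : 'M[R]_N) (A0 : 'M[R]_n) (b c : R) (s l : seq R) :
  (forall i, \sum_j A0 i j = c) ->
  char_poly P = \prod_(mu <- s) ('X - mu%:P) ->
  char_poly A0 = \prod_(la <- c :: l) ('X - la%:P) ->
  char_poly (cblock P A0 b) =
  \prod_(mu <- s) (('X - (phi c (4 * n%:R * b ^+ 2) true mu)%:P)
                   * ('X - (phi c (4 * n%:R * b ^+ 2) false mu)%:P))
  * (\prod_(la <- l) ('X - la%:P)) ^+ N.
Proof.
move=> hA hP h0.
have hN : N = size s.
  have := size_char_poly P; by rewrite hP size_prod_XsubC => -[->].
have hD : 0 <= 4 * n%:R * b ^+ 2 :> R.
  by apply: mulr_ge0; [apply: mulr_ge0|apply: sqr_ge0]; rewrite ?ler0n.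
apply: (poly_eq_ev (c := c)) => x hx.
have hxc : x - c != 0 by rewrite subr_eq0.
pose y := x - b * b * n%:R / (x - c).
have hTL : (x - c) *: (x%:M - P) - (b * b * n%:R)%:M = (x - c) *: (y%:M - P :> 'M[R]_N).
  apply/matrixP => i j; rewrite !mxE; case: (i == j); rewrite ?mulr1n ?mulr0n /y.
    by field.
  by rewrite subr0.
have key : (x - c) ^+ size s * \prod_(mu <- s) (y - mu)
    = \prod_(mu <- s) ((x - c) * (x - mu) - 4 * n%:R * b ^+ 2 / 4).
  elim: (s) => [|mu t IH]; first by rewrite !big_nil expr0 mulr1.
  rewrite !big_cons /= exprS -IH.
  have e : (x - c) * (y - mu) = (x - c) * (x - mu) - 4 * n%:R * b ^+ 2 / 4.
    by rewrite /y; field.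
  by rewrite -e; ring.
have := step_eval P b x hA.
rewrite hTL detZ -!horner_charpoly hP h0 !horner_prod big_cons /= hornerXsubC => H.
rewrite hornerM horner_exp !horner_prod.
under eq_bigr do rewrite hornerM !hornerXsubC phi_prod //.
under [X in _ * X ^+ _]eq_bigr do rewrite hornerXsubC.
apply: (mulIf (expf_neq0 N hxc)); rewrite H -key -hN.
have -> : \prod_(j <- l) ('X - j%:P).[x] = \prod_(j <- l) (x - j).
  by apply: eq_bigr => j _; rewrite hornerXsubC.
have -> : \prod_(j <- s) ('X - j%:P).[y] = \prod_(j <- s) (y - j).
  by apply: eq_bigr => j _; rewrite hornerXsubC.
rewrite exprMn.
move: ((x - c) ^+ N) ((\prod_(j <- l) (x - j)) ^+ N) (\prod_(mu <- s) (y - mu)) => a1 a2 a3.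
by ring.
Qed.

Lemma card_sumR (T : finType) (R : pzSemiRingType) (A : {set T}) :
  (#|A|)%:R = \sum_(x : T) (x \in A)%:R :> R.
Proof.
rewrite -sum1_card natr_sum big_mkcond; apply: eq_bigr => x _.
by case: (x \in A).
Qed.

Lemma hadj_rowsum (R : pzRingType) n (E : {set {set 'I_n}}) k r :
  kr_regular E k r ->
  forall i, \sum_j hadj R E i j = r%:R * (k%:R - 1).
Proof.
case=> hk hr i.
have e1 : forall j, hadj R E i j =
    \sum_(e : {set 'I_n}) ((e \in E) && (i \in e) && (j \in e) && (j != i))%:R.
  move=> j; rewrite mxE; have [->|hij] := eqVneq i j.
    by rewrite big1 // => e _; rewrite andbF.
  rewrite card_sumR; apply: eq_bigr => e _.
  by rewrite inE /= andbT andbA.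
under eq_bigr do rewrite e1.
rewrite exchange_big /=.
have e2 : forall e : {set 'I_n},
   \sum_(j : 'I_n) ((e \in E) && (i \in e) && (j \in e) && (j != i))%:R
   = ((e \in E) && (i \in e))%:R * (k%:R - 1) :> R.
  move=> e; have [/andP[eE ie]|he] := boolP ((e \in E) && (i \in e)).
    have hke := hk e eE.
    have hc : #|e :\ i| = (k - 1)%N.
      by rewrite -hke (cardsD1 i e) ie add1n subn1.
    have k1 : (1 <= k)%N by rewrite -hke card_gt0; apply/set0Pn; exists i.
    rewrite mul1r -(natrB _ k1) -hc card_sumR; apply: eq_bigr => j _.
    by rewrite in_setD1 andbC.
  by rewrite mul0r big1 // => j _; rewrite (negbTE he).
under eq_bigr do rewrite e2.
rewrite -big_distrl /= -(hr i) card_sumR; congr (_ * _); apply: eq_bigr => e _.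
by rewrite inE.
Qed.

Lemma char_castmx (R : comNzRingType) a b (e : a = b) (M : 'M[R]_a) :
  char_poly (castmx (e, e) M) = char_poly M.
Proof. by case: b / e; rewrite castmx_id. Qed.

Lemma prod_nseq_flat (R : comNzRingType) (T : Type) t (u : seq T) (G : T -> R) :
  \prod_(x <- flatten (nseq t u)) G x = (\prod_(x <- u) G x) ^+ t.
Proof.
rewrite big_flatten big_nseq; elim: t => [|t IH] /=; first by rewrite expr0.
by rewrite IH exprS.
Qed.

Lemma prod_spec (R : rcfType) n (c D : R) (lam : seq R) m (G : R -> {poly R}) :
  \prod_(x <- corona_spec n c D lam m) G x =
  (\prod_(l <- lam) \prod_(x <- Phi c D m.-1 l) G x) *
  \prod_(j <- iota 0 m.-1)
     (\prod_(l <- behead lam) \prod_(x <- Phi c D j l) G x) ^+ (n * (n + 1) ^ (m - j - 2)).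
Proof.
rewrite /corona_spec big_cat big_flatten big_map; congr (_ * _).
rewrite big_flatten big_map; apply: eq_bigr => j _.
by rewrite prod_nseq_flat big_flatten big_map.
Qed.

Lemma prodPhiS (R : rcfType) (c D : R) j l :
  \prod_(x <- Phi c D j.+1 l) ('X - x%:P) =
  \prod_(x <- Phi c D j l) (('X - (phi c D true x)%:P) * ('X - (phi c D false x)%:P)).
Proof.
rewrite /= big_flatten big_map; apply: eq_bigr => y _.
by rewrite big_cons big_seq1.
Qed.

Lemma spec_step (R : rcfType) n (c D : R) (lam' : seq R) m :
  \prod_(x <- corona_spec n c D (c :: lam') m.+2) ('X - x%:P)
  = \prod_(mu <- corona_spec n c D (c :: lam') m.+1)
       (('X - (phi c D true mu)%:P) * ('X - (phi c D false mu)%:P))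
    * (\prod_(x <- lam') ('X - x%:P)) ^+ Nsz n m.
Proof.
rewrite !prod_spec /=.
under eq_bigr => l _ do rewrite prodPhiS.
rewrite big_cons.
have -> : iota 1 m = [seq j.+1 | j <- iota 0 m] by exact: (iotaDl 1 0 m).
rewrite big_cons big_map -!mulrA; congr (_ * (_ * _)).
rewrite mulrC; congr (_ * _).
  apply: eq_bigr => j _; rewrite subSS; congr (_ ^+ _).
  by apply: eq_bigr => l _; rewrite prodPhiS.
have -> : (m.+2 - 0 - 2 = m)%N by rewrite subn0 !subSS subn0.
by rewrite /Nsz; congr (_ ^+ _); apply: eq_bigr => l _; rewrite big_seq1.
Qed.

Unset Implicit Arguments.


Theorem theorem5p1 (R : rcfType) (n k r : nat) (E : {set {set 'I_n}})
    (lam' : seq R) :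
  is_hypergraph E ->
  kr_regular E k r ->
  char_poly (hadj R E)
    = \prod_(x <- (r%:R * (k%:R - 1)) :: lam') ('X - x%:P) ->
  forall m : nat, (1 <= m)%N ->
    char_poly (corona_mx (hadj R E) (bcoef n k)%:R m.-1)
    = \prod_(x <- corona_spec n (r%:R * (k%:R - 1))
                     (4 * n%:R * ((bcoef n k)%:R) ^+ 2)
                     ((r%:R * (k%:R - 1)) :: lam') m)
        ('X - x%:P).
Proof.
move=> _ hreg h0 [//|m] _ /=.
have hA := hadj_rowsum R hreg.
elim: m => [|m IH].
  rewrite /= char_castmx h0 prod_spec big_nil mulr1 /=.
  by apply: eq_bigr => l _; rewrite big_seq1.
have -> : corona_mx (hadj R E) (bcoef n k)%:R m.+1 =
  castmx (esym (NszS n m), esym (NszS n m))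
    (cblock (corona_mx (hadj R E) (bcoef n k)%:R m) (hadj R E) (bcoef n k)%:R) by [].
by rewrite char_castmx (step_char _ hA IH h0) spec_step.
Qed.
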